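(* Every consistent normal modal logic $\Lambda$ is of exactly one of the following types: Type A: $F_\circ\models\Lambda$; Type B: $F_\bullet\models\Lambda$ and $\Lambda\vdash\Box^n\bot$ for some $n\ge 1$; Type C: $F_\bullet\models\Lambda$, $\Lambda\not\vdash\Box^n\bot$ for all $n\ge1$, and $\Lambda\vdash\Diamond^{\le n}\Box\bot$ for some $n\ge 1$.
   Context: A normal modal logic is a set of modal formulas containing all propositional tautologies, the axiom $\Box(\phi\to\psi)\to(\Box\phi\to\Box\psi)$ and $\Diamond\phi\leftrightarrow\neg\Box\neg\phi$, and closed under modus ponens, uniform substitution and necessitation; $\Lambda\vdash\phi$ means $\phi\in\Lambda$; $\Lambda$ is consistent if $\bot\notin\Lambda$. $F_\circ$ is the Kripke frame consisting of a single reflexive world; $F_\bullet$ is the Kripke frame consisting of a single irreflexive world; $F\models\Lambda$ means every formula of $\Lambda$ is valid on $F$. $\Box^0\phi=\phi$, $\Box^{k+1}\phi=\Box\Box^k\phi$, similarly for $\Diamond^k$, and $\Diamond^{\le n}\phi=\bigvee_{k\le n}\Diamond^k\phi$. *)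

(* Defs.v *)
Inductive form : Type :=
| Var : nat -> form
| Bot : form
| Imp : form -> form -> form
| Box : form -> form
| Dia : form -> form.

Definition Neg (a : form) : form := Imp a Bot.
Definition Top : form := Neg Bot.
Definition Or (a b : form) : form := Imp (Neg a) b.
Definition And (a b : form) : form := Neg (Imp a (Neg b)).
Definition Iff (a b : form) : form := And (Imp a b) (Imp b a).

Fixpoint peval (v : form -> bool) (a : form) : bool :=
  match a with
  | Var n => v (Var n)
  | Bot => false
  | Imp a b => implb (peval v a) (peval v b)
  | Box a => v (Box a)
  | Dia a => v (Dia a)
  end.

(* propositional tautology (substitution instance of a classical tautology) *)
Definition tautology (a : form) : Prop := forall v : form -> bool, peval v a = true.

Fixpoint subst (s : nat -> form) (a : form) : form :=
  match a with
  | Var n => s n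
  | Bot => Bot
  | Imp a b => Imp (subst s a) (subst s b)
  | Box a => Box (subst s a)
  | Dia a => Dia (subst s a)
  end.

(* A logic is a set of formulas; L a means "L |- a", i.e. a ∈ L. *)
Definition logic := form -> Prop.

Record normal (L : logic) : Prop := {
  n_taut : forall a, tautology a -> L a;
  n_K : forall a b, L (Imp (Box (Imp a b)) (Imp (Box a) (Box b)));
  n_dual : forall a, L (Iff (Dia a) (Neg (Box (Neg a))));
  n_mp : forall a b, L (Imp a b) -> L a -> L b;
  n_subst : forall s a, L a -> L (subst s a);
  n_nec : forall a, L a -> L (Box a)
}.

Definition consistent (L : logic) : Prop := ~ L Bot.

Record frame : Type := { world : Type; rel : world -> world -> Prop }.

Fixpoint sat (F : frame) (V : nat -> world F -> Prop) (w : world F) (a : form) : Prop :=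
  match a with
  | Var n => V n w
  | Bot => False
  | Imp a b => sat F V w a -> sat F V w b
  | Box a => forall u, rel F w u -> sat F V u a
  | Dia a => exists u, rel F w u /\ sat F V u a
  end.

Definition valid_on (F : frame) (a : form) : Prop :=
  forall (V : nat -> world F -> Prop) (w : world F), sat F V w a.

Definition frame_validates (F : frame) (L : logic) : Prop :=
  forall a, L a -> valid_on F a.

Definition F_circ : frame := {| world := unit; rel := fun _ _ => True |}.
Definition F_bullet : frame := {| world := unit; rel := fun _ _ => False |}.

Fixpoint boxn (k : nat) (a : form) : form :=
  match k with O => a | S k => Box (boxn k a) end.
Fixpoint dian (k : nat) (a : form) : form :=
  match k with O => a | S k => Dia (dian k a) end.

Fixpoint dia_le (n : nat) (a : form) : form :=
  match n with
  | O => dian 0 a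
  | S m => Or (dia_le m a) (dian (S m) a)
  end.

Definition typeA (L : logic) : Prop := frame_validates F_circ L.
Definition typeB (L : logic) : Prop :=
  frame_validates F_bullet L /\ exists n, 1 <= n /\ L (boxn n Bot).
Definition typeC (L : logic) : Prop :=
  frame_validates F_bullet L /\ (forall n, 1 <= n -> ~ L (boxn n Bot)) /\
  exists n, 1 <= n /\ L (dia_le n (Box Bot)).

(* Main.v *)
Require Import Defs.
From Stdlib Require Import Classical ClassicalEpsilon Arith Lia Bool.

Definition Q d := Neg (dia_le d (Box Bot)).

Ltac taut := unfold tautology; cbv [Q dia_le dian Neg Top Or And Iff]; let v := fresh "v" in intro v; simpl;
  repeat (match goal with
          | |- context [peval v ?x] => destruct (peval v x)
          | |- context [v ?x] => destruct (v x) end); reflexivity.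

Lemma mp1 L : normal L -> forall p q, L p -> tautology (Imp p q) -> L q.
Proof. intros H p q Hp T. eapply (n_mp L H); [apply (n_taut L H); exact T| exact Hp]. Qed.

Lemma mp2 L : normal L -> forall p1 p2 q, L p1 -> L p2 -> tautology (Imp p1 (Imp p2 q)) -> L q.
Proof. intros H p1 p2 q H1 H2 T. eapply (n_mp L H); [|exact H2]. exact (mp1 L H _ _ H1 T). Qed.

Lemma mp3 L : normal L -> forall p1 p2 p3 q, L p1 -> L p2 -> L p3 -> tautology (Imp p1 (Imp p2 (Imp p3 q))) -> L q.
Proof. intros H p1 p2 p3 q H1 H2 H3 T. eapply (n_mp L H); [|exact H3]. exact (mp2 L H _ _ _ H1 H2 T). Qed.

Lemma itrans L : normal L -> forall a b c, L (Imp a b) -> L (Imp b c) -> L (Imp a c).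
Proof. intros H a b c H1 H2. apply (mp2 L H _ _ _ H1 H2). taut. Qed.

Lemma reg L : normal L -> forall a b, L (Imp a b) -> L (Imp (Box a) (Box b)).
Proof. intros H a b H1. eapply (n_mp L H). apply n_K; auto. apply n_nec; auto. Qed.

Lemma dual1 L : normal L -> forall a, L (Imp (Dia a) (Neg (Box (Neg a)))).
Proof. intros H a. apply (mp1 L H _ _ (n_dual L H a)). taut. Qed.
Lemma dual2 L : normal L -> forall a, L (Imp (Neg (Box (Neg a))) (Dia a)).
Proof. intros H a. apply (mp1 L H _ _ (n_dual L H a)). taut. Qed.

Lemma box_and L : normal L -> forall a b, L (Imp (Box a) (Imp (Box b) (Box (And a b)))).
Proof. intros H a b.
  assert (H1 : L (Imp (Box a) (Box (Imp b (And a b))))).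
  { apply reg; auto. apply n_taut; auto. taut. }
  apply (mp2 L H _ _ _ H1 (n_K L H b (And a b))). taut. Qed.


Lemma dia_le_first : forall v d x, peval v x = true -> peval v (dia_le d x) = true.
Proof. intros v d x Hx. induction d; simpl in *. exact Hx.
  rewrite IHd. simpl. destruct (peval v (dian d x)); reflexivity. Qed.

Lemma Q_noBox L : normal L -> forall d, L (Imp (Q d) (Neg (Box Bot))).
Proof. intros H d. apply n_taut; auto. intro v. unfold Q, Neg. simpl.
  destruct (v (Box Bot)) eqn:E; [|destruct (peval v (dia_le d (Box Bot))); reflexivity].
  rewrite dia_le_first; [reflexivity|]. simpl. exact E. Qed.

Lemma Q_box L : normal L -> forall d, L (Imp (Q (S d)) (Box (Q d))).
Proof. intros H d. induction d.
  - apply (mp1 L H _ _ (dual2 L H (Box Bot))). taut.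
  - assert (A1 : L (Imp (Q (S (S d))) (Box (Q d)))).
    { eapply itrans; [auto| |exact IHd]. apply n_taut; auto. taut. }
    assert (A2 : L (Imp (Q (S (S d))) (Box (Neg (dian (S d) (Box Bot)))))).
    { apply (mp1 L H _ _ (dual2 L H (dian (S d) (Box Bot)))). taut. }
    assert (A3 : L (Imp (Box (And (Q d) (Neg (dian (S d) (Box Bot))))) (Box (Q (S d))))).
    { apply reg; auto. apply n_taut; auto. taut. }
    eapply itrans; [exact H| |exact A3].
    apply (mp3 L H _ _ _ _ A1 A2 (box_and L H (Q d) (Neg (dian (S d) (Box Bot))))).
    taut.
Qed.

Lemma box_step L : normal L -> forall d c, L (Imp (Q d) c) -> L (Imp (Q (S d)) (Box c)).
Proof. intros H d c H1. eapply itrans; [exact H|apply Q_box; exact H|]. apply reg; auto. Qed.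

Lemma box_step_neg L : normal L -> forall d c, L (Imp (Q d) (Neg c)) -> L (Imp (Q (S d)) (Neg (Box c))).
Proof. intros H d c H1.
  assert (A1 := box_step L H d _ H1).
  assert (A2 := Q_noBox L H (S d)).
  assert (A3 : L (Imp (Box c) (Box (Imp (Neg c) Bot)))).
  { apply reg; auto. apply n_taut; auto. taut. }
  assert (A4 := itrans L H _ _ _ A3 (n_K L H (Neg c) Bot)).
  apply (mp3 L H _ _ _ _ A1 A2 A4). taut. Qed.

Fixpoint closed (a : form) : Prop :=
  match a with
  | Var _ => False | Bot => True
  | Imp a b => closed a /\ closed b
  | Box a => closed a | Dia a => closed a end.

Fixpoint cval (a : form) : bool :=
  match a with
  | Var _ => false | Bot => false
  | Imp a b => implb (cval a) (cval b)
  | Box a => cval a | Dia a => cval a end.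

Fixpoint bval (a : form) : bool :=
  match a with
  | Var _ => false | Bot => false
  | Imp a b => implb (bval a) (bval b)
  | Box a => true | Dia a => false end.

Fixpoint depth (a : form) : nat :=
  match a with
  | Var _ => 0 | Bot => 0
  | Imp a b => Nat.max (depth a) (depth b)
  | Box a => S (depth a) | Dia a => S (depth a) end.

Lemma closed_circ L : normal L -> forall b, closed b -> forall d, depth b <= d ->
  (cval b = true -> L (Imp (Q d) b)) /\ (cval b = false -> L (Imp (Q d) (Neg b))).
Proof. intros H b. induction b; simpl; intros Hc d Hd.
  - contradiction.
  - split; intros E; [discriminate|]. apply n_taut; auto. taut.
  - destruct Hc as [C1 C2].
    destruct (IHb1 C1 d ltac:(lia)) as [P1 N1]. destruct (IHb2 C2 d ltac:(lia)) as [P2 N2].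
    destruct (cval b1), (cval b2); simpl; split; intro E; try discriminate.
    + apply (mp1 L H _ _ (P2 eq_refl)). taut.
    + apply (mp2 L H _ _ _ (P1 eq_refl) (N2 eq_refl)). taut.
    + apply (mp1 L H _ _ (P2 eq_refl)). taut.
    + apply (mp1 L H _ _ (N1 eq_refl)). taut.
  - destruct d as [|d]; [lia|].
    destruct (IHb Hc d ltac:(lia)) as [P N].
    split; intro E.
    + apply box_step; auto.
    + apply box_step_neg; auto.
  - destruct d as [|d]; [lia|].
    destruct (IHb Hc d ltac:(lia)) as [P N].
    split; intro E.
    + assert (A : L (Imp (Q d) (Neg (Neg b)))).
      { apply (mp1 L H _ _ (P E)). taut. }
      eapply itrans; [exact H| apply (box_step_neg L H _ _ A) | apply dual2; auto].
    + assert (A1 := box_step L H _ _ (N E)).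
      apply (mp2 L H _ _ _ A1 (dual1 L H b)). taut.
Qed.

Lemma closed_bullet L : normal L -> forall b, closed b ->
  (bval b = true -> L (Imp (Box Bot) b)) /\ (bval b = false -> L (Imp (Box Bot) (Neg b))).
Proof. intros H b. induction b; simpl; intros Hc.
  - contradiction.
  - split; intros E; [discriminate|]. apply n_taut; auto. taut.
  - destruct Hc as [C1 C2].
    destruct (IHb1 C1) as [P1 N1]. destruct (IHb2 C2) as [P2 N2].
    destruct (bval b1), (bval b2); simpl; split; intro E; try discriminate.
    + apply (mp1 L H _ _ (P2 eq_refl)). taut.
    + apply (mp2 L H _ _ _ (P1 eq_refl) (N2 eq_refl)). taut.
    + apply (mp1 L H _ _ (P2 eq_refl)). taut.
    + apply (mp1 L H _ _ (N1 eq_refl)). taut.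
  - split; intro E; [|discriminate]. apply reg; auto. apply n_taut; auto. taut.
  - split; intro E; [discriminate|].
    assert (A1 : L (Imp (Box Bot) (Box (Neg b)))).
    { apply reg; auto. apply n_taut; auto. taut. }
    apply (mp2 L H _ _ _ A1 (dual1 L H b)). taut.
Qed.

Lemma neg_dian L : normal L -> L (Neg (Box Bot)) -> forall k, L (Neg (dian k (Box Bot))).
Proof. intros H H0 k. induction k; simpl; auto.
  apply (mp2 L H _ _ _ (n_nec L H _ IHk) (dual1 L H (dian k (Box Bot)))). taut. Qed.

Lemma Q_all L : normal L -> L (Neg (Box Bot)) -> forall d, L (Q d).
Proof. intros H H0 d. induction d; [exact H0|].
  apply (mp2 L H _ _ _ IHd (neg_dian L H H0 (S d))). taut. Qed.

Lemma sat_subst F V s : forall a w, sat F V w (subst s a) <-> sat F (fun n u => sat F V u (s n)) w a.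
Proof. induction a; simpl; intros w; try tauto.
  all: try (rewrite IHa1, IHa2; tauto).
  all: try (split; intros H1 u Hu; apply IHa; auto; fail).
  all: try (split; intros [u [Hu H1]]; exists u; split; auto; apply IHa; auto; fail).
Qed.

Lemma sat_ext F V1 V2 : (forall n u, V1 n u <-> V2 n u) -> forall a w, sat F V1 w a <-> sat F V2 w a.
Proof. intros HV. induction a; simpl; intros w; try tauto. all: try apply HV.
  all: try (rewrite IHa1, IHa2; tauto).
  all: try (split; intros H1 u Hu; apply IHa; auto; fail).
  all: try (split; intros [u [Hu H1]]; exists u; split; auto; apply IHa; auto; fail).
Qed.

Definition sb F (V : nat -> world F -> Prop) (w0 : world F) (n : nat) : form :=
  if excluded_middle_informative (V n w0) then Top else Bot.

Lemma sb_closed F V w0 : forall a, closed (subst (sb F V w0) a).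
Proof. induction a; simpl; auto. unfold sb. destruct excluded_middle_informative; simpl; auto. Qed.

Lemma sat_sb F V w0 (Hu : forall u : world F, u = w0) : forall a, sat F V w0 a <-> sat F V w0 (subst (sb F V w0) a).
Proof. intros a. rewrite sat_subst. apply sat_ext. intros n u. rewrite (Hu u). unfold sb.
  destruct excluded_middle_informative; simpl; tauto. Qed.

Lemma sat_circ V : forall b, closed b -> (sat F_circ V tt b <-> cval b = true).
Proof. induction b; simpl; intros Hc.
  - contradiction.
  - split; [tauto|discriminate].
  - destruct Hc as [C1 C2]. rewrite IHb1, IHb2 by auto.
    destruct (cval b1), (cval b2); simpl; intuition discriminate.
  - rewrite <- IHb by auto. split; [intros H1; apply H1; auto | intros H1 []; auto].
  - rewrite <- IHb by auto. split; [intros [[] [_ H1]]; auto | intros H1; exists tt; auto].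
Qed.

Lemma sat_bullet V : forall b, closed b -> (sat F_bullet V tt b <-> bval b = true).
Proof. induction b; simpl; intros Hc.
  - contradiction.
  - split; [tauto|discriminate].
  - destruct Hc as [C1 C2]. rewrite IHb1, IHb2 by auto.
    destruct (bval b1), (bval b2); simpl; intuition discriminate.
  - split; [auto | intros _ u []].
  - split; [intros [u [[] _]] | discriminate].
Qed.

Lemma unit_eq : forall u : unit, u = tt. Proof. intros []; reflexivity. Qed.

Lemma fail_circ L : normal L -> forall a, L a -> ~ valid_on F_circ a ->
  exists d, L (Neg (Q d)).
Proof. intros H a La Hv. apply not_all_ex_not in Hv as [V Hv]. apply not_all_ex_not in Hv as [w Hv].
  destruct w. rewrite (sat_sb F_circ V tt unit_eq) in Hv.
  set (b := subst (sb F_circ V tt) a) in *.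
  assert (Cb : closed b) by apply sb_closed.
  rewrite sat_circ in Hv by auto.
  destruct (closed_circ L H b Cb (depth b) (le_n _)) as [_ N].
  exists (depth b). assert (Lb : L b) by (apply n_subst; auto).
  apply (mp2 L H _ _ _ Lb (N (not_true_is_false _ Hv))). taut.
Qed.

Lemma circ_boxn V : forall n, 1 <= n -> ~ sat F_circ V tt (boxn n Bot).
Proof. intros n Hn. destruct n; [lia|]. clear Hn. induction n; simpl in *.
  - intros H1. exact (H1 tt I).
  - intros H1. apply IHn. exact (H1 tt I).
Qed.

Lemma circ_dian V : forall k, ~ sat F_circ V tt (dian k (Box Bot)).
Proof. induction k; simpl.
  - intros H1. exact (H1 tt I).
  - intros [[] [_ H1]]. auto.
Qed.

Lemma circ_dia_le V : forall n, ~ sat F_circ V tt (dia_le n (Box Bot)).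
Proof. induction n; simpl.
  - intros H1. exact (H1 tt I).
  - intros H1. apply (circ_dian V (S n)). apply H1. exact IHn.
Qed.

Theorem theorem4p13 (L : logic) :
  normal L -> consistent L ->
  (typeA L /\ ~ typeB L /\ ~ typeC L) \/
  (~ typeA L /\ typeB L /\ ~ typeC L) \/
  (~ typeA L /\ ~ typeB L /\ typeC L).
Proof.
  intros H Hc.
  assert (AnB : typeA L -> ~ typeB L).
  { intros HA [_ [n [Hn Ln]]]. apply (circ_boxn (fun _ _ => False) n Hn). apply HA; auto. }
  assert (AnC : typeA L -> ~ typeC L).
  { intros HA [_ [_ [n [Hn Ln]]]]. apply (circ_dia_le (fun _ _ => False) n). apply HA; auto. }
  assert (BnC : typeB L -> ~ typeC L).
  { intros [_ [n [Hn Ln]]] [_ [HC _]]. exact (HC n Hn Ln). }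
  destruct (classic (typeA L)) as [HA|HA]; [left; auto|right].
  (* Makinson: bullet validates L *)
  assert (Hb : frame_validates F_bullet L).
  { destruct (classic (L (Neg (Box Bot)))) as [HN|HN].
    - exfalso. apply HA. intros a La. apply NNPP. intros Hv.
      destruct (fail_circ L H a La Hv) as [d Hd].
      apply Hc. apply (mp2 L H _ _ _ (Q_all L H HN d) Hd). taut.
    - intros a La V w. destruct w. apply NNPP. intros Hv.
      rewrite (sat_sb F_bullet V tt unit_eq) in Hv.
      set (b := subst (sb F_bullet V tt) a) in *.
      assert (Cb : closed b) by apply sb_closed.
      rewrite sat_bullet in Hv by auto.
      destruct (closed_bullet L H b Cb) as [_ N].
      assert (Lb : L b) by (apply n_subst; auto).
      apply HN. apply (mp2 L H _ _ _ Lb (N (not_true_is_false _ Hv))). taut. }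
  assert (Hd : exists n, 1 <= n /\ L (dia_le n (Box Bot))).
  { unfold typeA, frame_validates in HA. apply not_all_ex_not in HA as [a HA].
    apply imply_to_and in HA as [La Hv].
    destruct (fail_circ L H a La Hv) as [d Hd].
    exists (S d). split; [lia|]. apply (mp1 L H _ _ Hd). taut. }
  destruct (classic (exists n, 1 <= n /\ L (boxn n Bot))) as [HB|HB].
  - left. assert (typeB L) by (split; auto). auto.
  - right. assert (typeC L).
    { split; [auto|split; [|auto]]. intros n Hn Ln. apply HB. eauto. }
    split; [auto|split; [|auto]]. intros [_ X]. exact (HB X).
Qed.
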